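(* Let $f:\{1,\dots,n\}\to\{0,1\}$ and $S=\{i: f(i)=1\}$. Define $s(f(i),i)=0$ if $f(i)=0$ and $s(f(i),i)=i$ if $f(i)=1$, and let $T$ be the string of length $4n+2$ over the alphabet $\{0,\$\}\cup\{1,\dots,n\}$ given by $$T=0^{2n}\circ\$\circ\Big(\bigcirc_{i=1}^{n} 0\circ s(f(i),i)\Big)\circ 0,$$ where $\circ$ and $\bigcirc$ denote concatenation and $0^{2n}$ is $2n$ copies of the symbol $0$. Then the LZ77 factorization of $T$ has exactly $z=2|S|+4$ factors.
   Context: LZ77 factorization (greedy): start with $i=1$; while $i\le |T|$: if $T[i]$ is the first occurrence of its symbol, $T[i]$ is the next factor and $i\gets i+1$; otherwise take the largest $j\ge i$ such that $T[i..j]$ occurs in $T$ starting at some position $i'<i$ (overlap allowed), make $T[i..j]$ the next factor and set $i\gets j+1$. $z$ is the number of factors. The symbols $0,\$,1,\dots,n$ are pairwise distinct. *)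

(* Defs.v *)
From HB Require Import structures.
From mathcomp Require Import all_boot.
Set Implicit Arguments. Unset Strict Implicit. Unset Printing Implicit Defensive.

Inductive sym := Zero | Dollar | Idx of nat.

Definition sym_eqb (a b : sym) : bool :=
  match a, b with
  | Zero, Zero => true
  | Dollar, Dollar => true
  | Idx i, Idx j => i == j
  | _, _ => false
  end.

Lemma sym_eqP : Equality.axiom sym_eqb.
Proof.
case=> [||i] [||j] /=; try by constructor.
by apply: (iffP eqP) => [->|[]].
Qed.

HB.instance Definition _ := hasDecEq.Build sym sym_eqP.

Section LZ77.
Variable T : seq sym.
(* positions are 0-indexed here; T[i] = nth Zero T i *)
Local Notation t i := (nth Zero T i).

(* Length of the longest L such that T[i..i+L-1] (inside T) occurs starting at
   some earlier position i' < i (overlap allowed). *)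
Definition lpf (i : nat) : nat :=
  \max_(L < (size T - i).+1 |
        [exists i' : 'I_i, [forall k : 'I_L, t (i' + k) == t (i + k)]]) L.

(* Length of the greedy LZ77 factor starting at position i: 1 if T[i] is the
   first occurrence of its symbol (then lpf i = 0), else lpf i. *)
Definition lz_factor_len (i : nat) : nat := maxn 1 (lpf i).

Fixpoint lz_count_from (fuel i : nat) : nat :=
  match fuel with
  | 0 => 0
  | fuel'.+1 => if i < size T then (lz_count_from fuel' (i + lz_factor_len i)).+1
                else 0
  end.

(* z = number of factors of the LZ77 factorization of T (each factor has length
   >= 1, so size T steps of fuel suffice). *)
Definition lz77_z : nat := lz_count_from (size T) 0.
End LZ77.

Definition s_sym (f : nat -> bool) (i : nat) : sym := if f i then Idx i else Zero.

Definition lemma13_text (n : nat) (f : nat -> bool) : seq sym :=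
  nseq (2 * n) Zero ++ [:: Dollar] ++
  flatten [seq [:: Zero; s_sym f i] | i <- iota 1 n] ++ [:: Zero].

Definition card_S (n : nat) (f : nat -> bool) : nat := count f (iota 1 n).

(* Main.v *)
Require Import Defs.
From mathcomp Require Import all_boot.
From mathcomp Require Import zify.

Section Gen.
Variable T : seq sym.
Local Notation t i := (nth Zero T i).
Definition mt i' i L := forall k, k < L -> t (i'+k) = t (i+k).

Lemma condP i L : reflect (exists i', i' < i /\ mt i' i L)
  [exists i' : 'I_i, [forall k : 'I_L, t (i' + k) == t (i + k)]].
Proof.
apply: (iffP existsP) => [[i' /forallP H]|[i' [Hi Hm]]].
  exists i'; split => // k Hk; apply/eqP; exact: (H (Ordinal Hk)).
exists (Ordinal Hi); apply/forallP => k; apply/eqP; exact: Hm.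
Qed.

Lemma lpf_new i : (forall i', i' < i -> t i' <> t i) -> lpf T i = 0.
Proof.
move=> H; apply/eqP; rewrite -leqn0; apply/bigmax_leqP => L /condP [i' [Hi Hm]].
rewrite leqn0; apply/eqP; case: (posnP L) => // L0; exfalso.
have := Hm 0 L0; rewrite !addn0; exact: H.
Qed.

Lemma lpf_eq i L : L <= size T - i -> (exists i', i' < i /\ mt i' i L) ->
  (L = size T - i \/ forall i', i' < i -> ~ mt i' i L.+1) -> lpf T i = L.
Proof.
move=> HL Hex Hno; apply/eqP; rewrite eqn_leq; apply/andP; split.
  apply/bigmax_leqP => L' /condP [i' [Hi Hm]].
  case: Hno => [->|Hno]; first by rewrite -ltnS ltn_ord.
  rewrite leqNgt; apply/negP => HLL; apply: (Hno i' Hi) => k Hk; apply: Hm.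
  exact: leq_trans Hk HLL.
have HL' : L < (size T - i).+1 by [].
by apply: (@leq_bigmax_cond _ _ (fun L : 'I_(size T - i).+1 => nat_of_ord L) (Ordinal HL')); apply/condP.
Qed.

Lemma step fuel i : i < size T ->
  lz_count_from T fuel.+1 i = (lz_count_from T fuel (i + lz_factor_len T i)).+1.
Proof. by move=> H; rewrite /= H. Qed.

Lemma stop fuel : lz_count_from T fuel (size T) = 0.
Proof. by case: fuel => //= fuel; rewrite ltnn. Qed.
End Gen.

Lemma count_take_find (g : pred nat) s : count g (take (find g s) s) = 0.
Proof. elim: s => //= x s IH; case Hx: (g x) => /=; rewrite ?Hx ?IH //. Qed.

Lemma count_find (g : pred nat) s : has g s -> count g s = (count g (drop (find g s).+1 s)).+1.
Proof.
elim: s => //= x s IH; case: (g x) => //= H; first by rewrite drop0.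
Qed.

Lemma flat_nth (f : nat -> bool) a m r :
  (nth Zero (flatten [seq [:: Zero; s_sym f i] | i <- iota a m]) r = Zero /\
    forall k, k < m -> r = k.*2.+1 -> ~~ f (a + k)) \/
  exists k, [/\ k < m, r = k.*2.+1, f (a + k) &
    nth Zero (flatten [seq [:: Zero; s_sym f i] | i <- iota a m]) r = Idx (a + k)].
Proof.
elim: m a r => [|m IH] a r /=; first by left; rewrite nth_nil.
case: r => [|[|r]] /=.
- by left; split => // k _; rewrite doubleS.
- rewrite /s_sym; case H: (f a); last first.
    left; split => // [[|k]] _; rewrite ?addn0 ?H // doubleS.
  by right; exists 0; rewrite addn0.
case: (IH a.+1 r) => [[-> Hk]|[k [Hk Hr Hf Hn]]].
  left; split => // [[|k]] Hk1 Hr; first by [].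
  by rewrite -addSnnS; apply: Hk; [|move: Hr; rewrite doubleS => -[]].
right; exists k.+1; rewrite addSnnS in Hf Hn; split => //; lia.
Qed.

Lemma flat_size (f : nat -> bool) a m :
  size (flatten [seq [:: Zero; s_sym f i] | i <- iota a m]) = m.*2.
Proof. by elim: m a => //= m IH a; rewrite IH doubleS. Qed.

Section Spec.
Variables (n : nat) (f : nat -> bool).
Local Notation T := (lemma13_text n f).
Local Notation t i := (nth Zero (lemma13_text n f) i).

Lemma sizeT : size T = 4 * n + 2.
Proof. rewrite /lemma13_text !size_cat size_nseq flat_size /=. lia. Qed.

Lemma tcase q :
  (t q = Zero /\ q <> 2 * n /\ forall m, 1 <= m <= n -> f m -> q <> 2 * n + 2 * m) \/
  (q = 2 * n /\ t q = Dollar) \/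
  exists m, [/\ 1 <= m <= n, f m, q = 2 * n + 2 * m & t q = Idx m].
Proof.
rewrite /lemma13_text nth_cat size_nseq; case: ltnP => Hq.
  by left; rewrite nth_nseq Hq; split => //; split => [|m _ _]; lia.
case E: (q - 2 * n) => [|r].
  by right; left; split => //; lia.
rewrite /= nth_cat flat_size; case: ltnP => Hr.
  case: (flat_nth f 1 n r) => [[-> Hk]|[k [Hk Hr' Hf Hn]]].
    left; split => //; split => [|m Hm Hfm]; first lia.
    move=> Hq'; have := Hk (m.-1) ltac:(lia) ltac:(lia).
    by rewrite (_ : 1 + m.-1 = m) ?Hfm //; lia.
  right; right; exists (1 + k); split => //; lia.
left; split; last (split => [|m Hm Hfm]; lia).
by case: (r - n.*2) => [|[|x]].
Qed.

Lemma tZ q : q <> 2 * n -> (forall m, 1 <= m <= n -> f m -> q <> 2 * n + 2 * m) -> t q = Zero.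
Proof.
move=> H1 H2; case: (tcase q) => [[]//|[[]//|[m [Hm Hf Hq _]]]].
by case: (H2 m Hm Hf Hq).
Qed.

Lemma tDollar : t (2 * n) = Dollar.
Proof.
case: (tcase (2 * n)) => [[_ []]//|[[]//|[m [Hm Hf Hq _]]]]; lia.
Qed.

Lemma tIdx q m : t q = Idx m -> [/\ q = 2 * n + 2 * m, f m & 1 <= m <= n].
Proof.
case: (tcase q) => [[-> _]//|[[_ ->]//|[m' [Hm Hf Hq ->]]]] [<-].
by split.
Qed.

Lemma tIdx' m : 1 <= m <= n -> f m -> t (2 * n + 2 * m) = Idx m.
Proof.
move=> Hm Hf; case: (tcase (2 * n + 2 * m)) => [[_ [_ H]]|[[]|[m' [Hm' Hf' Hq ->]]]].
- by case: (H m Hm Hf).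
- lia.
- congr Idx; lia.
Qed.

End Spec.

Section Run.
Variables (n : nat) (f : nat -> bool).
Local Notation T := (lemma13_text n f).
Local Notation t i := (nth Zero (lemma13_text n f) i).

Lemma case_nohas i fuel : 1 < i <= n.+1 -> ~~ has f (iota i (n.+1 - i)) ->
  size T - (2 * n + 2 * i - 1) <= fuel ->
  lz_count_from T fuel (2 * n + 2 * i - 1) = 1.
Proof.
move=> Hi Hh; rewrite sizeT => Hf.
case: fuel Hf => [|fuel] Hf; first lia.
rewrite step; last by rewrite sizeT; lia.
have HL : lpf T (2 * n + 2 * i - 1) = 2 * n + 3 - 2 * i.
  apply: lpf_eq; first by rewrite sizeT; lia.
    exists 0; split; first lia.
    move=> k Hk; rewrite !tZ //; try lia.
      move=> m Hm Hfm Heq; move/hasPn: Hh => /(_ m); rewrite mem_iota Hfm.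
      by move=> /(_ ltac:(lia)).
  by left; rewrite sizeT; lia.
rewrite /lz_factor_len HL.
have -> : 2 * n + 2 * i - 1 + maxn 1 (2 * n + 3 - 2 * i) = size T.
  rewrite sizeT; lia.
by rewrite stop.
Qed.

Lemma run d : forall i, n.+1 - i <= d -> 1 <= i <= n.+1 ->
  (1 < i) || has f (iota i (n.+1 - i)) -> forall fuel,
  size T - (2 * n + 2 * i - 1) <= fuel ->
  lz_count_from T fuel (2 * n + 2 * i - 1) = 2 * count f (iota i (n.+1 - i)) + 1.
Proof.
elim: d => [|d IH] i Hd Hi Hh fuel Hfuel.
  have E : n.+1 - i = 0 by lia.
  move: Hh Hfuel; rewrite E /= orbF => Hh Hfuel.
  rewrite case_nohas ?E //; lia.
case Hs: (has f (iota i (n.+1 - i))); last first.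
  rewrite Hs orbF in Hh.
  have -> : count f (iota i (n.+1 - i)) = 0.
    by apply/eqP; rewrite eqn0Ngt -has_count Hs.
  rewrite case_nohas ?Hs //; lia.
set s := iota i (n.+1 - i) in Hs *.
have Hfind : find f s < n.+1 - i by rewrite -(size_iota i (n.+1 - i)) -has_find.
set j := i + find f s.
have Hj : f j by have := nth_find 0 Hs; rewrite nth_iota.
have Hbef : forall m, i <= m < j -> f m = false.
  move=> m Hm; have := @before_find _ 0 f s (m - i) ltac:(lia).
  by rewrite nth_iota; [rewrite (_ : i + (m - i) = m) //; lia | lia].
rewrite count_find // drop_iota.
have -> : i + (find f s).+1 = j.+1 by rewrite /j; lia.
have -> : n.+1 - i - (find f s).+1 = n.+1 - j.+1 by rewrite /j; lia.
rewrite sizeT in Hfuel.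
case: fuel Hfuel => [|[|fuel]] Hfuel; try lia.
rewrite step; last by rewrite sizeT; lia.
have HL : lpf T (2 * n + 2 * i - 1) = 2 * (j - i) + 1.
  apply: lpf_eq; first by rewrite sizeT; lia.
    exists 0; split; first lia.
    move=> k Hk; rewrite !tZ //; try lia.
      move=> m Hm Hfm Heq; have := Hbef m ltac:(lia); rewrite Hfm.
      by [].
  right=> i' Hi' Hm.
  have := Hm (2 * (j - i) + 1) (ltnSn _).
  rewrite (_ : 2 * n + 2 * i - 1 + (2 * (j - i) + 1) = 2 * n + 2 * j); last lia.
  rewrite tIdx' //; last lia.
  by case/tIdx => ? _ _; lia.
rewrite /lz_factor_len HL.
have -> : 2 * n + 2 * i - 1 + maxn 1 (2 * (j - i) + 1) = 2 * n + 2 * j by lia.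
rewrite step; last by rewrite sizeT; lia.
have HL2 : lpf T (2 * n + 2 * j) = 0.
  apply: lpf_new => i' Hi'; rewrite tIdx' //; last lia.
  by case/tIdx => ? _ _; lia.
rewrite /lz_factor_len HL2.
have -> : 2 * n + 2 * j + maxn 1 0 = 2 * n + 2 * j.+1 - 1 by lia.
rewrite IH //; try lia.
  by rewrite sizeT; lia.
Qed.
End Run.

Theorem lemma13 (n : nat) (f : nat -> bool) :
  0 < card_S n f ->
  lz77_z (lemma13_text n f) = 2 * card_S n f + 4.
Proof.
rewrite /card_S => Hc.
have Hn : 0 < n by case: n Hc.
rewrite /lz77_z sizeT.
have -> : 4 * n + 2 = (4 * n).+2 by lia.
rewrite step; last by rewrite sizeT; lia.
rewrite /lz_factor_len lpf_new // (_ : 0 + maxn 1 0 = 1) //.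
rewrite step; last by rewrite sizeT; lia.
have HL : lpf (lemma13_text n f) 1 = 2 * n - 1.
  apply: lpf_eq; first by rewrite sizeT; lia.
    exists 0; split => // k Hk; rewrite !tZ //; try lia.
  right=> i' Hi' Hm; have := Hm (2 * n - 1) ltac:(lia).
  rewrite (_ : 1 + (2 * n - 1) = 2 * n); last lia.
  rewrite tDollar tZ //; try lia.
rewrite /lz_factor_len HL.
have -> : 1 + maxn 1 (2 * n - 1) = 2 * n by lia.
have -> : (4 * n) = (4 * n - 1).+1 by lia.
rewrite step; last by rewrite sizeT; lia.
rewrite /lz_factor_len lpf_new; last first.
  move=> i' Hi'; rewrite tDollar tZ //; try lia.
have -> : 2 * n + maxn 1 0 = 2 * n + 2 * 1 - 1 by lia.
rewrite (@run n f (n.+1 - 1)) //; try lia.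
- have -> : n.+1 - 1 = n by lia.
  lia.
- by rewrite has_count (_ : n.+1 - 1 = n) ?Hc ?orbT //; lia.
- rewrite sizeT; lia.
Qed.
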